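(* Let $\Pi$ be a group and let $T$ be a function on $\Pi$ with values in an integral domain whose characteristic is not $2$. Then the following two sets of relations are equivalent: (P): (P1) $T(1)=2$; (P2) $T(g_1g_2)=T(g_2g_1)$; (P3) $T(g_1)T(g_2)T(g_3)+T(g_1g_2g_3)+T(g_1g_3g_2)-T(g_1g_2)T(g_3)-T(g_2g_3)T(g_1)-T(g_1g_3)T(g_2)=0$; (P4) $T(g)^2-T(g^2)=2$, for all $g,g_1,g_2,g_3\in\Pi$; (C): (C1) $T(1)=2$; (C2) $T(g_1)T(g_2)=T(g_1g_2)+T(g_1^{-1}g_2)$, for all $g_1,g_2\in\Pi$. *)

(* Defs.v *)
From mathcomp Require Import all_boot all_algebra.
Set Implicit Arguments. Unset Strict Implicit. Unset Printing Implicit Defensive.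
Import GRing.Theory.
Local Open Scope ring_scope.

Definition is_group (G : Type) (mul : G -> G -> G) (inv : G -> G) (e : G) : Prop :=
  (forall a b c, mul a (mul b c) = mul (mul a b) c) /\
  (forall a, mul e a = a) /\ (forall a, mul a e = a) /\
  (forall a, mul (inv a) a = e) /\ (forall a, mul a (inv a) = e).

Definition relP (G : Type) (mul : G -> G -> G) (e : G) (R : idomainType)
  (T : G -> R) : Prop :=
  T e = 2 /\
  (forall g1 g2, T (mul g1 g2) = T (mul g2 g1)) /\
  (forall g1 g2 g3,
     T g1 * T g2 * T g3 + T (mul (mul g1 g2) g3) + T (mul (mul g1 g3) g2)
     - T (mul g1 g2) * T g3 - T (mul g2 g3) * T g1 - T (mul g1 g3) * T g2 = 0) /\
  (forall g, T g ^+ 2 - T (mul g g) = 2).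

Definition relC (G : Type) (mul : G -> G -> G) (inv : G -> G) (e : G)
  (R : idomainType) (T : G -> R) : Prop :=
  T e = 2 /\
  (forall g1 g2, T g1 * T g2 = T (mul g1 g2) + T (mul (inv g1) g2)).

(* Main.v *)
Require Import Defs.
From mathcomp Require Import all_boot all_algebra.
From mathcomp Require Import ring.
Local Open Scope ring_scope.
Import GRing.Theory.

Theorem lemma3p2p2 (G : Type) (mul : G -> G -> G) (inv : G -> G) (e : G)
  (R : idomainType) (T : G -> R) :
  is_group mul inv e -> (2 : R) != 0 ->
  (relP mul e T <-> relC mul inv e T).
Proof.
move=> [mA [m1l [m1r [mVl mVr]]]] H2.
have uniq : forall x y, mul x y = e -> y = inv x.
  by move=> x y H; rewrite -[y]m1l -(mVl x) -mA H m1r.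
have invinv : forall x, inv (inv x) = x.
  by move=> x; rewrite -(uniq (inv x) x (mVl x)).
have invM : forall x y, inv (mul x y) = mul (inv y) (inv x).
  move=> x y; symmetry; apply: uniq.
  by rewrite mA -(mA x y (inv y)) mVr m1r mVr.
split.
- move=> [Te [P2 [P3 P4]]]; split => //.
  have key : forall x b, T (mul x (inv b)) + T (mul x b) = T x * T b.
    move=> x b.
    have h3 := P3 (mul x (inv b)) b b.
    have hab : mul (mul x (inv b)) b = x by rewrite -mA mVl m1r.
    rewrite hab in h3.
    have h4 := P4 b.
    have hbb : T (mul b b) = T b ^+ 2 - 2 by rewrite -h4; ring.
    rewrite hbb in h3.
    have : 2 * (T (mul x (inv b)) + T (mul x b) - T x * T b) = 0.
      by rewrite -h3; ring.
    move/eqP; rewrite mulf_eq0 (negbTE H2) /= => /eqP hX.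
    by apply/eqP; rewrite -subr_eq0 hX.
  move=> g1 g2.
  by rewrite mulrC -key (P2 g2 (inv g1)) (P2 g2 g1) addrC.
- move=> [Te C2].
  have Tinv : forall a, T (inv a) = T a.
    move=> a; have := C2 a e; rewrite Te !m1r => h.
    apply: (addrI (T a)); rewrite -h; ring.
  have P2 : forall g1 g2, T (mul g1 g2) = T (mul g2 g1).
    move=> g1 g2.
    have ha := C2 g2 g1; have hb := C2 g1 g2.
    rewrite -[T (mul (inv g2) g1)]Tinv invM invinv mulrC hb in ha.
    exact: (addIr _ ha).
  split => //; split => //; split.
  + move=> g1 g2 g3.
    have e1 := C2 g1 g2.
    have e2 : T (mul (inv g1) g2) * T g3 =
       T (mul (mul (inv g1) g2) g3) + T (mul (mul (inv g2) g1) g3).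
      by rewrite C2 invM invinv.
    have e3 : T (mul g2 g3) * T g1 =
       T (mul (mul g1 g2) g3) + T (mul (mul (inv g1) g2) g3).
      by rewrite mulrC C2 !mA.
    have e4 : T (mul g1 g3) * T g2 =
       T (mul (mul g1 g3) g2) + T (mul (mul (inv g2) g1) g3).
      by rewrite mulrC C2 (P2 g2) mA.
    have d1 := e1; move/eqP: d1; rewrite -subr_eq0 => /eqP d1.
    have d2 := e2; move/eqP: d2; rewrite -subr_eq0 => /eqP d2.
    have d3 := e3; move/eqP: d3; rewrite -subr_eq0 => /eqP d3.
    have d4 := e4; move/eqP: d4; rewrite -subr_eq0 => /eqP d4.
    set L1 := (T g1 * T g2 - _) in d1.
    set L2 := (T (mul (inv g1) g2) * T g3 - _) in d2.
    set L3 := (T (mul g2 g3) * T g1 - _) in d3.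
    set L4 := (T (mul g1 g3) * T g2 - _) in d4.
    have -> : T g1 * T g2 * T g3 + T (mul (mul g1 g2) g3) + T (mul (mul g1 g3) g2)
     - T (mul g1 g2) * T g3 - T (mul g2 g3) * T g1 - T (mul g1 g3) * T g2
     = L1 * T g3 + L2 - L3 - L4 by rewrite /L1 /L2 /L3 /L4; ring.
    by rewrite d1 d2 d3 d4; ring.
  + move=> g; have h := C2 g g; rewrite mVl Te in h.
    by rewrite expr2 h; ring.
Qed.
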